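(* Let $L\subseteq B_i$ be an SINR-feasible set of links in a bucket $B_i$, let $e\in B_i$, and let $L^g=\{e'\in L:d_{e'}>d_{e'e}\}$. Then $\sum_{e'\in L^g}\bar a_{e'}(e)\le C$ for a constant $C$ depending only on $\alpha,\beta,\varepsilon$.
   Context: Constants: $\alpha\ge0$, $N>0$, $\beta>0$. Nodes lie in the Euclidean plane. A link is $e=(s_e,r_e,P_e)$; $\mathcal{L}$ is the set of links. $d_e=d(s_e,r_e)$, $d_{e'e}=d(s_{e'},r_e)$, $S_e=P_e/d_e^\alpha$, $S_{e'e}=P_{e'}/d_{e'e}^\alpha$, $\gamma_e=\beta S_e/(S_e-\beta N)$, $\hat a_{e'}(e)=S_{e'e}/S_e$, $a_{e'}(e)=\gamma_e\hat a_{e'}(e)$, $\bar a_{e'}(e)=\min\{1,a_{e'}(e)\}$. $L$ is SINR-feasible if $S_e/(N+\sum_{e'\in L\setminus\{e\}}S_{e'e})\ge\beta$ for all $e\in L$. Buckets: $S_{\min}=\min_{e\in\mathcal{L}}S_e$, $B_i=\{e\in\mathcal{L}:2^iS_{\min}\le S_e<2^{i+1}S_{\min}\}$. Standing assumption: there is a constant $\varepsilon>0$ with $S_e/N\ge(1+\varepsilon)\beta$ for all $e\in\mathcal{L}$. *)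

(* Defs.v *)
From HB Require Import structures.
From mathcomp Require Import all_boot all_order all_algebra.
From mathcomp Require Import all_classical all_reals all_analysis.
Set Implicit Arguments. Unset Strict Implicit. Unset Printing Implicit Defensive.
Import Order.TTheory GRing.Theory Num.Theory.
Local Open Scope ring_scope.

Section SINR.
Variable R : realType.

Definition point := (R * R)%type.
Definition dist (p q : point) : R :=
  Num.sqrt ((p.1 - q.1) ^+ 2 + (p.2 - q.2) ^+ 2).

Definition link := (point * point * R)%type.
Definition sndr (e : link) : point := e.1.1.
Definition rcvr (e : link) : point := e.1.2.
Definition pw (e : link) : R := e.2.

Variables (alpha beta N : R).

Definition dlen (e : link) : R := dist (sndr e) (rcvr e).
Definition dcross (e' e : link) : R := dist (sndr e') (rcvr e).

Definition Ssig (e : link) : R := pw e / powR (dlen e) alpha.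
Definition Scross (e' e : link) : R := pw e' / powR (dcross e' e) alpha.

Definition gamma (e : link) : R := beta * Ssig e / (Ssig e - beta * N).
Definition ahat (e' e : link) : R := Scross e' e / Ssig e.
Definition aff (e' e : link) : R := gamma e * ahat e' e.
Definition abar (e' e : link) : R := Num.min 1 (aff e' e).

Definition feasible (L : seq link) : Prop :=
  forall e, e \in L ->
    beta <= Ssig e / (N + \sum_(e' <- L | e' != e) Scross e' e).

Definition Smin (Ls : seq link) : R :=
  match Ls with
  | [::] => 0
  | e0 :: _ => \big[Num.min/Ssig e0]_(e <- Ls) Ssig e
  end.

Definition bucket (Ls : seq link) (i : nat) (e : link) : bool :=
  [&& e \in Ls, 2 ^+ i * Smin Ls <= Ssig e & Ssig e < 2 ^+ i.+1 * Smin Ls].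

End SINR.

(* Main.v *)
Require Import Defs.
From HB Require Import structures.
From mathcomp Require Import all_boot all_order all_algebra.
From mathcomp Require Import all_classical all_reals all_analysis.
From mathcomp Require Import ring lra.
Import Order.TTheory GRing.Theory Num.Theory.
Local Open Scope ring_scope.

Section Aux.
Variable R : realType.

Lemma dist_ge0 (p q : Defs.point R) : 0 <= Defs.dist p q.
Proof. exact: sqrtr_ge0. Qed.

Lemma dist_sym (p q : Defs.point R) : Defs.dist p q = Defs.dist q p.
Proof. by rewrite /Defs.dist -(sqrrN (p.1 - q.1)) -(sqrrN (p.2 - q.2)) !opprB. Qed.

Lemma dist_tri (p q r : Defs.point R) : Defs.dist p r <= Defs.dist p q + Defs.dist q r.
Proof.
rewrite /Defs.dist.
set c := p.1 - q.1; set d := p.2 - q.2; set e := q.1 - r.1; set f := q.2 - r.2.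
have -> : p.1 - r.1 = c + e by rewrite /c /e addrA subrK.
have -> : p.2 - r.2 = d + f by rewrite /d /f addrA subrK.
set u := Num.sqrt (c ^+ 2 + d ^+ 2); set v := Num.sqrt (e ^+ 2 + f ^+ 2).
have u0 : 0 <= u by exact: sqrtr_ge0.
have v0 : 0 <= v by exact: sqrtr_ge0.
have hu : u ^+ 2 = c ^+ 2 + d ^+ 2 by rewrite sqr_sqrtr // addr_ge0 // sqr_ge0.
have hv : v ^+ 2 = e ^+ 2 + f ^+ 2 by rewrite sqr_sqrtr // addr_ge0 // sqr_ge0.
have -> : u + v = Num.sqrt ((u + v) ^+ 2) by rewrite sqrtr_sqr ger0_norm // addr_ge0.
rewrite ler_sqrt; last by rewrite sqr_ge0.
have uv0 : 0 <= u * v by rewrite mulr_ge0.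
have huv : (u * v) ^+ 2 = (c ^+ 2 + d ^+ 2) * (e ^+ 2 + f ^+ 2) by rewrite exprMn hu hv.
have key : c * e + d * f <= u * v.
  have h : (c * e + d * f) ^+ 2 <= (u * v) ^+ 2.
    rewrite huv; have := sqr_ge0 (c * f - d * e); nra.
  case: (lerP (c * e + d * f) 0) => h0; first by apply: le_trans h0 uv0.
  by rewrite -(ler_pXn2r (n:=2)) // ?nnegrE ?ltW.
nra.
Qed.

Lemma count_split (T : Type) (P a : pred T) (s : seq T) :
  count P s = (count (fun x => a x && P x) s + count (fun x => ~~ a x && P x) s)%N.
Proof.
elim: s => //= x s ->; case: (P x); case: (a x) => /=; rewrite ?add1n ?add0n ?addn0 ?addSn ?addnS //.
Qed.

Lemma exists_min (T : eqType) (f : T -> R) (s : seq T) :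
  s != [::] -> exists2 x, x \in s & forall y, y \in s -> f x <= f y.
Proof.
elim: s => // x s IH _.
case: (eqVneq s [::]) => [->|sn].
  by exists x; rewrite ?mem_head // => y; rewrite inE => /eqP ->.
have [z zs zm] := IH sn.
case: (lerP (f x) (f z)) => h.
  exists x; first exact: mem_head.
  move=> y; rewrite inE => /predU1P [->//|/zm]; exact: le_trans.
exists z; first by rewrite inE zs orbT.
move=> y; rewrite inE => /predU1P [->|/zm //]; exact: ltW.
Qed.

End Aux.
Arguments dist_tri {R}.
Arguments dist_sym {R}.
Arguments exists_min {R T}.

Theorem lemma4 (R : realType) (alpha beta eps : R) :
  0 <= alpha -> 0 < beta -> 0 < eps ->
  exists C : R,
  forall (N : R) (Ls L : seq (link R)) (i : nat) (e : link R),
    0 < N ->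
    (* geometric non-degeneracy: no sender sits on a receiver *)
    (forall f f', f \in Ls -> f' \in Ls -> 0 < dcross f' f) ->
    (* standing assumption *)
    (forall f, f \in Ls -> (1 + eps) * beta <= Ssig alpha f / N) ->
    uniq L ->
    {subset L <= bucket alpha Ls i} ->
    feasible alpha beta N L ->
    bucket alpha Ls i e ->
    \sum_(e' <- L | dcross e' e < dlen e') abar alpha beta N e' e <= C.
Proof.
move=> a0 b0 eps0.
set T3 := powR 3 alpha.
have T30 : 0 < T3 by rewrite powR_gt0.
exists (1 + 2 * T3 / beta).
move=> N Ls L i e N0 Hnd Hst uL sub feas be.
set P := fun x : link R => dcross x e < dlen x.
have Sp : forall f, f \in Ls -> 0 < Ssig alpha f.
  move=> f /Hst h.
  have h1 : 0 < (1 + eps) * beta by rewrite mulr_gt0 // addr_gt0.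
  have h2 := lt_le_trans h1 h.
  have -> : Ssig alpha f = Ssig alpha f / N * N by rewrite divfK // gt_eqF.
  exact: mulr_gt0.
have inLs : forall x, x \in L -> x \in Ls by move=> x /sub /and3P [].
have dl0 : forall x, x \in Ls -> 0 < dlen x by move=> x xL; exact: (Hnd x x xL xL).
apply: (@le_trans _ _ (count P L)%:R).
  rewrite -sum1_count natr_sum; apply: ler_sum => x _.
  by rewrite /abar ge_min lexx.
case: (eqVneq [seq x <- L | P x] [::]) => [F0|Fn].
  have : count P L = 0%N by rewrite -size_filter F0.
  move=> ->; rewrite addr_ge0 // divr_ge0 // ?mulr_ge0 ?ltW //.
have [e' e'F e'm] := exists_min (fun x : link R => dlen x) _ Fn.
move: e'F; rewrite mem_filter => /andP [Pe' e'L].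
have e'Ls := inLs _ e'L.
set S' := Ssig alpha e'.
have S'0 : 0 < S' := Sp _ e'Ls.
set k := count (fun x => (x != e') && P x) L.
have hk : (count P L <= k + 1)%N.
  rewrite (@count_split _ P (fun x => x != e')) leq_add2l.
  apply: (@leq_trans (count_mem e' L)).
    by apply: sub_count => x /andP [/negPn/eqP -> _] /=.
  by rewrite count_uniq_mem // e'L.
set c := S' / (2 * T3).
have term : forall x, x \in L -> (x != e') && P x -> c <= Scross alpha x e'.
  move=> x xL /andP [_ Px].
  have xLs := inLs _ xL.
  have dx0 := dl0 _ xLs.
  have dxe0 : 0 < dcross x e' := Hnd e' x e'Ls xLs.
  have hd : dcross x e' <= 3 * dlen x.
    have t1 : dcross x e' <= dcross x e + dcross e' e + dlen e'.
      rewrite /dcross /dlen.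
      apply: (le_trans (dist_tri _ (rcvr e) _)); rewrite -addrA lerD2l.
      rewrite (dist_sym (sndr e') (rcvr e)).
      exact: dist_tri.
    have t2 : dlen e' <= dlen x by apply: e'm; rewrite mem_filter Px xL.
    rewrite /P in Pe' Px; lra.
  have hp : powR (dcross x e') alpha <= T3 * powR (dlen x) alpha.
    rewrite /T3 -powRM ?ler0n //; last exact: ltW.
    by apply: ge0_ler_powR => //; rewrite nnegrE ?mulr_ge0 ?ler0n // ltW.
  have Bx0 : 0 < powR (dlen x) alpha by rewrite powR_gt0.
  have A0 : 0 < powR (dcross x e') alpha by rewrite powR_gt0.
  have Sx0 := Sp _ xLs.
  have hS : S' <= 2 * Ssig alpha x.
    move: (sub _ xL) => /and3P [_ lx _]; move: e'L => /sub /and3P [_ _ ue].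
    rewrite /S'; rewrite exprS in ue; lra.
  have -> : Scross alpha x e' = Ssig alpha x * powR (dlen x) alpha / powR (dcross x e') alpha.
    by rewrite /Scross /Ssig divfK // gt_eqF.
  rewrite /c.
  rewrite ler_pdivrMr ?mulr_gt0 //.
  rewrite mulrAC ler_pdivlMr //.
  set A := powR (dcross x e') alpha in hp A0 *.
  set B := powR (dlen x) alpha in hp Bx0 *.
  set Sx := Ssig alpha x in hS Sx0 *.
  have h1 : S' * A <= 2 * Sx * A by rewrite ler_pM2r.
  have h2 : 2 * Sx * A <= 2 * Sx * (T3 * B) by rewrite ler_pM2l // mulr_gt0.
  lra.
have Sc0 : forall x, x \in L -> 0 <= Scross alpha x e'.
  move=> x xL; have xLs := inLs _ xL.
  have Bx0 : 0 < powR (dlen x) alpha by rewrite powR_gt0 // dl0.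
  rewrite /Scross /Ssig.
  have -> : pw x = Ssig alpha x * powR (dlen x) alpha by rewrite /Ssig divfK // gt_eqF.
  by rewrite divr_ge0 ?powR_ge0 // mulr_ge0 // ltW // Sp.
set D := \sum_(x <- L | x != e') Scross alpha x e'.
have hD : k%:R * c <= D.
  rewrite /D (bigID P) /=.
  have -> : k%:R * c = \sum_(x <- L | (x != e') && P x) c.
    by rewrite /k -sum1_count natr_sum mulr_suml; apply: eq_bigr => x _; rewrite mul1r.
  rewrite -[X in X <= _]addr0; apply: lerD.
    rewrite (big_seq_cond (fun x => (x != e') && P x)) [X in _ <= X](big_seq_cond (fun x => (x != e') && P x)).
    by apply: ler_sum => x /andP [xL Q]; apply: term.
  rewrite big_seq_cond; apply: sumr_ge0 => x /andP [xL _]; exact: Sc0.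
have c0 : 0 < c by rewrite divr_gt0 // mulr_gt0.
have D0 : 0 <= D by apply: le_trans hD; rewrite mulr_ge0 // ltW.
have hf : beta <= S' / (N + D) := feas e' e'L.
have ND : 0 < N + D by lra.
rewrite ler_pdivlMr // in hf.
have hk2 : beta * (k%:R * c) <= S'.
  apply: le_trans hf; rewrite ler_pM2l //; lra.
have hkR : k%:R <= 2 * T3 / beta.
  have e1 : c * (2 * T3) = S' by rewrite /c divfK // gt_eqF // mulr_gt0.
  have T2 : 0 < 2 * T3 by rewrite mulr_gt0.
  have h3 : beta * k%:R * S' <= 2 * T3 * S'.
    have := ler_pM2r T2 (beta * (k%:R * c)) S'; rewrite hk2 => /esym h.
    have -> : beta * k%:R * S' = beta * (k%:R * c) * (2 * T3) by rewrite -e1; ring.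
    by rewrite [2 * T3 * S']mulrC -h.
  rewrite ler_pdivlMr //.
  rewrite ler_pM2r // in h3; lra.
apply: (@le_trans _ _ (k.+1)%:R); first by rewrite ler_nat -addn1.
by rewrite -addn1 natrD addrC lerD2l.
Qed.
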